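(* For every $x>0$, $$\left(\frac{\sqrt{x}+1}{2}\right)^2\ge S(\sqrt{x})\,\sqrt{x},$$ where $S$ is the Specht ratio.
   Context: The Specht ratio is $S(x)=\dfrac{x^{\frac{1}{x-1}}}{e\log x^{\frac{1}{x-1}}}$ for $x>0$, $x\neq 1$, and $S(1)=1$. *)

(* Defs.v *)
From Stdlib Require Import Reals.
Open Scope R_scope.

Definition specht (x : R) : R :=
  if Req_EM_T x 1 then 1
  else Rpower x (1 / (x - 1)) / (exp 1 * ln (Rpower x (1 / (x - 1)))).

(* Main.v *)
Require Import Defs.
From Stdlib Require Import Reals Lra.
From Coquelicot Require Import Coquelicot.
Open Scope R_scope.

Lemma ln_le_sub1 (y : R) : 0 < y -> ln y <= y - 1.
Proof. intros Hy. pose proof (exp_ineq1_le (ln y)). rewrite exp_ln in H; lra. Qed.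

Lemma mono_lemma (h h' : R -> R) (t : R) :
  0 < t -> (forall c, 0 < c -> is_derive h c (h' c)) ->
  (forall c, 0 < c -> 0 <= h' c) -> h 1 = 0 -> 0 <= h t * (t - 1).
Proof.
  intros Ht Hd Hp H1.
  destruct (Rtotal_order t 1) as [Hlt|[Heq|Hgt]].
  - destruct (MVT_cor2 h h' t 1 Hlt) as [c [Hc Hc2]].
    { intros c Hc. apply is_derive_Reals. apply Hd. lra. }
    assert (0 <= h' c) by (apply Hp; lra).
    assert (h t = - (h' c * (1 - t))) by lra.
    rewrite H0. assert (0 <= h' c * (1 - t)) by (apply Rmult_le_pos; lra). nra.
  - subst. lra.
  - destruct (MVT_cor2 h h' 1 t Hgt) as [c [Hc Hc2]].
    { intros c Hc. apply is_derive_Reals. apply Hd. lra. }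
    assert (0 <= h' c) by (apply Hp; lra).
    assert (h t = (h' c * (t - 1))) by lra.
    rewrite H0. assert (0 <= h' c * (t - 1)) by (apply Rmult_le_pos; lra). nra.
Qed.

Lemma ineq1 (t : R) : 0 < t -> 0 <= (ln t - 2 * (t - 1) / (t + 1)) * (t - 1).
Proof.
  intros Ht.
  apply (mono_lemma (fun t => ln t - 2 * (t - 1) / (t + 1))
           (fun t => (t - 1) ^ 2 / (t * (t + 1) ^ 2))); auto.
  - intros c Hc. auto_derive. { repeat split; lra. } field. lra.
  - intros c Hc. apply Rmult_le_pos. apply pow2_ge_0. apply Rlt_le, Rinv_0_lt_compat.
    apply Rmult_lt_0_compat; try lra. apply pow_lt; lra.
  - rewrite ln_1. field_simplify; lra.
Qed.

Lemma ineq2 (t : R) : 0 < t ->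
  0 <= ((t - 1) * (ln ((t + 1) / 2) + 1) - t * ln t) * (t - 1).
Proof.
  intros Ht.
  apply (mono_lemma (fun t => (t - 1) * (ln ((t + 1) / 2) + 1) - t * ln t)
           (fun t => ln ((t + 1) / 2) - ln t + (t - 1) / (t + 1))); auto.
  - intros c Hc. auto_derive. { repeat split; lra. } unfold Rdiv; field. lra.
  - intros c Hc. cbv beta.
    assert (E : ln ((c + 1) / 2) - ln c = - ln (2 * c / (c + 1))).
    { rewrite ln_div by lra. rewrite ln_div by lra. rewrite ln_mult by lra. ring. }
    rewrite E. pose proof (ln_le_sub1 (2 * c / (c + 1))).
    assert (0 < 2 * c / (c + 1)) by (apply Rdiv_lt_0_compat; lra).
    specialize (H H0).
    assert (2 * c / (c + 1) - 1 = (c - 1) / (c + 1)) by (field; lra). lra.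
  - replace ((1 + 1) / 2) with 1 by field. rewrite ln_1. ring.
Qed.

Theorem proposition2p2 (x : R) (hx : 0 < x) :
  ((sqrt x + 1) / 2) ^ 2 >= specht (sqrt x) * sqrt x.
Proof.
  assert (Ht : 0 < sqrt x) by (apply sqrt_lt_R0; lra).
  set (t := sqrt x) in *. clearbody t.
  unfold specht. destruct (Req_EM_T t 1) as [E1|N1].
  { subst. lra. }
  assert (Hd : (t - 1) <> 0) by lra.
  assert (Hsq : 0 < (t - 1) * (t - 1)).
  { destruct (Rtotal_order t 1) as [h|[h|h]]; nra. }
  set (L := ln t / (t - 1)).
  set (A := (t + 1) / 2).
  assert (HA : 0 < A) by (unfold A; lra).
  replace (Rpower t (1 / (t - 1))) with (exp L)
    by (unfold Rpower, L; f_equal; field; lra).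
  rewrite ln_exp.
  pose proof (ineq1 t Ht) as I1.
  pose proof (ineq2 t Ht) as I2.
  assert (H1 : L * A - 1 = ((ln t - 2 * (t - 1) / (t + 1)) * (t - 1)) * ((t + 1) / 2)
                 / ((t - 1) * (t - 1))).
  { unfold L, A. field. lra. }
  assert (H1' : 0 <= L * A - 1).
  { rewrite H1. apply Rmult_le_pos. apply Rmult_le_pos; lra.
    apply Rlt_le, Rinv_0_lt_compat; lra. }
  assert (HL : 0 < L).
  { destruct (Rle_or_lt L 0) as [h|h]; auto. nra. }
  assert (H2 : ln A + 1 - t * L = ((t - 1) * (ln ((t + 1) / 2) + 1) - t * ln t) * (t - 1)
                 / ((t - 1) * (t - 1))).
  { unfold L, A. field. lra. }
  assert (H2' : 0 <= ln A + 1 - t * L).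
  { rewrite H2. apply Rmult_le_pos; auto. apply Rlt_le, Rinv_0_lt_compat; lra. }
  assert (HE : exp L * t / exp 1 <= A).
  { assert (exp (t * L - 1) <= exp (ln A)).
    { destruct (Rle_lt_or_eq_dec _ _ (Rle_trans (t*L-1) (ln A) (ln A) ltac:(lra) (Rle_refl _))) as [h|h].
      - left. apply exp_increasing; auto.
      - rewrite h. lra. }
    rewrite exp_ln in H by auto.
    replace (t * L - 1) with (L + ln t - 1) in H by (unfold L; field; lra).
    unfold Rminus in H. rewrite exp_plus, exp_plus, exp_ln, exp_Ropp in H by auto.
    unfold Rdiv. lra. }
  assert (He : 0 < exp 1) by apply exp_pos.
  assert (Hel : 0 < exp L) by apply exp_pos.
  replace (exp L / (exp 1 * L) * t) with ((exp L * t / exp 1) * / L) by (field; lra).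
  assert (0 < / L) by (apply Rinv_0_lt_compat; lra).
  assert (/ L <= A).
  { assert (L * (/ L) = 1) by (field; lra). nra. }
  assert ((exp L * t / exp 1) * / L <= A * A).
  { apply Rle_trans with (A * / L).
    - apply Rmult_le_compat_r; lra.
    - apply Rmult_le_compat_l; lra. }
  fold A. simpl. lra.
Qed.
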